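(* Suppose $(X,y)$ is orthogonal separable and $\lambda\in\mathbb R^N$ satisfies $\mathrm{diag}(y)\lambda\ge0$. Let $\hat D_0$ be an $N\times N$ diagonal $0/1$ matrix with $u_0=X^T\hat D_0\lambda$ and $\|u_0\|_2\le1$. Then for every diagonal $0/1$ matrix $D_j$ with $\hat D_0-D_j\ge0$ we have $\|X^TD_j\lambda\|_2\le\|u_0\|_2\le1$; consequently, if $D_j\in\mathcal P$, then $\max_{\|u\|_2\le1,\ (2D_j-I)Xu\ge0}\lambda^TD_jXu\le1$.
   Context: $X\in\mathbb R^{N\times d}$ rows $x_n$, $y\in\{\pm1\}^N$. Orthogonal separable: $x_n^Tx_{n'}>0$ if $y_n=y_{n'}$ and $x_n^Tx_{n'}\le0$ if $y_n\ne y_{n'}$. $\mathcal P=\{\mathrm{diag}(\mathbb I(Xw\ge0)):w\in\mathbb R^d\}$. Inequalities between vectors/diagonal matrices are entrywise. *)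

(* Defs.v *)
From HB Require Import structures.
From mathcomp Require Import all_boot all_order all_algebra.
Set Implicit Arguments. Unset Strict Implicit. Unset Printing Implicit Defensive.
Import Order.TTheory GRing.Theory Num.Theory.
Local Open Scope ring_scope.

Section Defs.
Variable R : rcfType.

Definition norm2 (n : nat) (v : 'cV[R]_n) : R :=
  Num.sqrt (\sum_(i < n) v i 0 ^+ 2).

Definition is_label (N : nat) (y : 'cV[R]_N) : Prop :=
  forall i, y i 0 = 1 \/ y i 0 = -1.

Definition orth_separable (N d : nat) (X : 'M[R]_(N, d)) (y : 'cV[R]_N) : Prop :=
  forall n n' : 'I_N,
    (y n 0 = y n' 0 -> 0 < (row n X *m (row n' X)^T) 0 0) /\
    (y n 0 <> y n' 0 -> (row n X *m (row n' X)^T) 0 0 <= 0).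

Definition diag01 (N : nat) (D : 'M[R]_N) : Prop :=
  forall i j, (i != j -> D i j = 0) /\ (D i i = 0 \/ D i i = 1).

Definition mx_nonneg (m n : nat) (A : 'M[R]_(m, n)) : Prop :=
  forall i j, 0 <= A i j.

Definition in_patterns (N d : nat) (X : 'M[R]_(N, d)) (D : 'M[R]_N) : Prop :=
  exists w : 'cV[R]_d,
    D = diag_mx (\row_i (if 0 <= (X *m w) i 0 then (1 : R) else 0)).
End Defs.

(* Main.v *)
Require Import Defs.
From HB Require Import structures.
From mathcomp Require Import all_boot all_order all_algebra.
From mathcomp Require Import ring lra.
Import Order.TTheory GRing.Theory Num.Theory.
Local Open Scope ring_scope.

Lemma sq_expand (R : rcfType) n (v w : 'cV[R]_n) :
  \sum_k (v + w) k 0 ^+ 2 =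
  \sum_k v k 0 ^+ 2 + 2 * \sum_k v k 0 * w k 0 + \sum_k w k 0 ^+ 2.
Proof.
rewrite mulr_sumr -!big_split /=; apply: eq_bigr => k _; rewrite mxE; ring.
Qed.

Lemma dot_nonneg (R : rcfType) N d (X : 'M[R]_(N, d)) (c e : 'cV[R]_N) :
  (forall i j, 0 <= c i 0 * e j 0 * (row i X *m (row j X)^T) 0 0) ->
  0 <= \sum_k (X^T *m c) k 0 * (X^T *m e) k 0.
Proof.
move=> H.
have -> : \sum_k (X^T *m c) k 0 * (X^T *m e) k 0 =
  \sum_i \sum_j c i 0 * e j 0 * (row i X *m (row j X)^T) 0 0.
  transitivity (\sum_k \sum_i \sum_j X i k * c i 0 * (X j k * e j 0)).
    apply: eq_bigr => k _; rewrite !mxE big_distrl; apply: eq_bigr => i _.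
    rewrite !mxE big_distrr /=; apply: eq_bigr => j _; rewrite !mxE //.
  rewrite exchange_big; apply: eq_bigr => i _; rewrite exchange_big.
  apply: eq_bigr => j _; rewrite !mxE big_distrr; apply: eq_bigr => k _.
  rewrite !mxE; rewrite -[RHS]/((c i 0 * e j 0) * (X i k * X j k)); ring.
by apply: sumr_ge0 => i _; apply: sumr_ge0 => j _.
Qed.

Lemma diag_mul (R : rcfType) N (A : 'M[R]_N) (v : 'cV[R]_N) i :
  (forall i j, i != j -> A i j = 0) -> (A *m v) i 0 = A i i * v i 0.
Proof.
move=> H; rewrite mxE (bigD1 i) //= big1 ?addr0 // => j Hj.
by rewrite H ?mul0r // eq_sym.
Qed.

Theorem lemma6 (R : rcfType) (N d : nat) (X : 'M[R]_(N, d)) (y : 'cV[R]_N)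
  (lam : 'cV[R]_N) (D0 : 'M[R]_N) :
  is_label y ->
  orth_separable X y ->
  mx_nonneg (diag_mx y^T *m lam) ->
  diag01 D0 ->
  norm2 (X^T *m D0 *m lam) <= 1 ->
  forall Dj : 'M[R]_N, diag01 Dj -> mx_nonneg (D0 - Dj) ->
    (norm2 (X^T *m Dj *m lam) <= norm2 (X^T *m D0 *m lam) /\
     norm2 (X^T *m D0 *m lam) <= 1) /\
    (in_patterns X Dj ->
     forall u : 'cV[R]_d, norm2 u <= 1 ->
       mx_nonneg (((2 : R) *: Dj - 1%:M) *m X *m u) ->
       (lam^T *m Dj *m X *m u) 0 0 <= 1).
Proof.
move=> Hy Hsep Hlam HD0 Hn Dj HDj HD0j.
have offj : forall i j, i != j -> Dj i j = 0 by move=> i j /(fun h => (HDj i j).1 h).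
have off0 : forall i j, i != j -> D0 i j = 0 by move=> i j /(fun h => (HD0 i j).1 h).
have Hv : norm2 (X^T *m Dj *m lam) <= norm2 (X^T *m D0 *m lam).
  have -> : X^T *m D0 *m lam = X^T *m (Dj *m lam) + X^T *m ((D0 - Dj) *m lam).
    by rewrite -mulmxDr -mulmxDl addrC subrK mulmxA.
  rewrite /norm2 -mulmxA ler_sqrt; last by apply: sumr_ge0 => k _; apply: sqr_ge0.
  rewrite sq_expand -addrA lerDl; apply: addr_ge0; last by apply: sumr_ge0 => k _; apply: sqr_ge0.
  apply: mulr_ge0 => //; apply: dot_nonneg => i j.
  rewrite diag_mul // diag_mul; last first.
    by move=> a b ab; rewrite !mxE off0 // offj // subr0.
  have la : forall k, 0 <= y k 0 * lam k 0.
    by move=> k; have := Hlam k 0; rewrite mul_diag_mx !mxE.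
  have a0 : 0 <= Dj i i by case: (HDj i i).2 => ->.
  have b0 : 0 <= (D0 - Dj) j j := HD0j j j.
  set G := (row i X *m (row j X)^T) 0 0.
  have key : 0 <= lam i 0 * lam j 0 * G.
    have li := la i; have lj := la j.
    have [Heq Hne] := Hsep i j; rewrite -/G in Heq Hne.
    case: (Hy i) => yi; case: (Hy j) => yj; rewrite yi yj in Heq Hne li lj.
    - have g := Heq erefl; apply: mulr_ge0; [apply: mulr_ge0|]; lra.
    - have g : G <= 0 by apply: Hne => h; lra.
      have -> : lam i 0 * lam j 0 * G = lam i 0 * ((- lam j 0) * (- G)) by ring.
      apply: mulr_ge0; [|apply: mulr_ge0]; lra.
    - have g : G <= 0 by apply: Hne => h; lra.
      have -> : lam i 0 * lam j 0 * G = (- lam i 0) * (lam j 0 * (- G)) by ring.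
      apply: mulr_ge0; [|apply: mulr_ge0]; lra.
    - have g := Heq erefl.
      have -> : lam i 0 * lam j 0 * G = (- lam i 0) * (- lam j 0) * G by ring.
      apply: mulr_ge0; [apply: mulr_ge0|]; lra.
  have -> : Dj i i * lam i 0 * ((D0 - Dj) j j * lam j 0) * G =
            (Dj i i * (D0 - Dj) j j) * (lam i 0 * lam j 0 * G) by ring.
  by apply: mulr_ge0 => //; apply: mulr_ge0.
split; first by split => //; exact: le_trans Hv Hn.
move=> _ u Hu _.
set a := X^T *m Dj *m lam.
have HDt : Dj^T = Dj.
  apply/matrixP => i j; rewrite mxE; case: (eqVneq i j) => [->//|ij].
  by rewrite !offj // eq_sym.
have -> : lam^T *m Dj *m X *m u = a^T *m u.
  by rewrite /a !trmx_mul trmxK HDt !mulmxA.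
have sq1 : forall n (v : 'cV[R]_n), norm2 v <= 1 -> \sum_k v k 0 ^+ 2 <= 1.
  move=> n v; rewrite /norm2 -{1}sqrtr1 ler_sqrt //.
have Sa := sq1 _ _ (le_trans Hv Hn); have Su := sq1 _ _ Hu.
rewrite mxE.
apply: (@le_trans _ _ (\sum_k (a k 0 ^+ 2 + u k 0 ^+ 2) / 2)).
  apply: ler_sum => k _; rewrite mxE.
  have := sqr_ge0 (a k 0 - u k 0); rewrite !expr2 => h; lra.
rewrite -mulr_suml big_split /=; lra.
Qed.
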